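(* Let $A$ be a finite set of $m$ alternatives and $N=\{1,\dots,n\}$ a set of agents, with preferences ranging over all weak orders on $A$. If there is an anonymous and neutral social decision scheme $f$ that satisfies efficiency and strategyproofness for $m$ alternatives and $n$ agents, then for all $m'\le m$ and $n'\le n$ there is a social decision scheme $f'$ defined for $m'$ alternatives and $n'$ agents that is also anonymous, neutral, efficient, and strategyproof.
   Context: $\mathcal{R}$ denotes the set of all complete and transitive binary relations (weak preferences) on $A$; a preference profile is $R=(\succsim_1,\dots,\succsim_n)\in\mathcal{R}^N$. $\Delta(A)=\{p\in\mathbb{R}_{\ge0}^A:\sum_{x\in A}p(x)=1\}$. A social decision scheme (SDS) is a function $f\colon\mathcal{R}^N\to\Delta(A)$. For $R\in\mathcal{R}^N$, $i\in N$ and $\succsim\in\mathcal{R}$, $R_{i:\succsim}$ denotes the profile obtained from $R$ by replacing $\succsim_i$ with $\succsim$. Anonymity: $f(R)=f(R\circ\sigma)$ for all $R$ and all permutations $\sigma$ of the agents. Neutrality: $f(R)(x)=f(\pi(R))(\pi(x))$ for all $R$, permutations $\pi$ of the alternatives and $x$, where $\pi(R)$ replaces each $\succsim_i$ by $\succsim_i^\pi$ with $\pi(x)\succsim_i^\pi\pi(y)$ iff $x\succsim_i y$. A utility function $u_i\colon A\to\mathbb{R}$ is consistent with $\succsim_i$ if $u_i(x)\ge u_i(y)\iff x\succsim_i y$, extended to lotteries by expectation. A utility representation $u$ assigns to each profile $R$ utility functions $u^R_i$ consistent with $\succsim_i$. Lottery $p$ $u$-dominates $q$ at $R$ if $u^R_i(p)\ge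 u^R_i(q)$ for all $i$, with strict inequality for some $i$. $f$ is efficient if for no profile $R$ is $f(R)$ $u$-dominated at $R$ for every utility representation $u$. $f$ is manipulable if there are $R$, $i$, $\succsim$ with $u^R_i(f(R_{i:\succsim}))>u^R_i(f(R))$ for every utility representation $u$; $f$ is strategyproof if it is not manipulable. *)

(* Defs.v *)
(* reals are an arbitrary realType (all are isomorphic to R). *)
From HB Require Import structures.
From mathcomp Require Import all_boot all_order all_fingroup all_algebra.
From mathcomp Require Import reals.
Set Implicit Arguments. Unset Strict Implicit. Unset Printing Implicit Defensive.
Import Order.TTheory GRing.Theory Num.Theory.
Local Open Scope ring_scope.

Definition is_weak_order (m : nat) (r : {ffun 'I_m -> {ffun 'I_m -> bool}}) : bool :=
  [forall x, forall y, r x y || r y x] &&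
  [forall x, forall y, forall z, r x y ==> r y z ==> r x z].

Definition pref (m : nat) := {r : {ffun 'I_m -> {ffun 'I_m -> bool}} | is_weak_order r}.

Definition prefrel (m : nat) (s : pref m) (x y : 'I_m) : bool := sval s x y.

Definition profile (m n : nat) := 'I_n -> pref m.

Definition lottery (R : realType) (m : nat) :=
  {p : {ffun 'I_m -> R} | [forall x, 0 <= p x] && (\sum_x p x == 1)}.

Definition lot (R : realType) (m : nat) (p : lottery R m) (x : 'I_m) : R := sval p x.

Definition SDS (R : realType) (m n : nat) := profile m n -> lottery R m.

Definition upd (m n : nat) (P : profile m n) (i : 'I_n) (s : pref m) : profile m n :=
  fun j => if j == i then s else P j.

Definition anonymous (R : realType) (m n : nat) (f : SDS R m n) : Prop :=
  forall (P : profile m n) (sigma : {perm 'I_n}), f (fun i => P (sigma i)) = f P.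

Lemma perm_weak_order (m : nat) (pi : {perm 'I_m}) (r : {ffun 'I_m -> {ffun 'I_m -> bool}}) :
  is_weak_order r ->
  is_weak_order [ffun a => [ffun b => r (pi^-1 a)%g (pi^-1 b)%g]].
Proof.
case/andP=> /forallP C /forallP T; apply/andP; split.
  apply/forallP=> a; apply/forallP=> b; rewrite !ffunE.
  exact: (forallP (C _)).
apply/forallP=> a; apply/forallP=> b; apply/forallP=> c; rewrite !ffunE.
exact: (forallP (forallP (T _) _)).
Qed.

Definition perm_pref (m : nat) (pi : {perm 'I_m}) (s : pref m) : pref m :=
  exist (fun r => is_weak_order r) _ (perm_weak_order pi (proj2_sig s)).

Definition neutral (R : realType) (m n : nat) (f : SDS R m n) : Prop :=
  forall (P : profile m n) (pi : {perm 'I_m}) (x : 'I_m),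
    lot (f P) x = lot (f (fun i => perm_pref pi (P i))) (pi x).

Definition consistent (R : realType) (m : nat) (s : pref m) (u : 'I_m -> R) : Prop :=
  forall x y, (u y <= u x) <-> prefrel s x y.

Definition EU (R : realType) (m : nat) (u : 'I_m -> R) (p : lottery R m) : R :=
  \sum_x lot p x * u x.

Definition is_urep (R : realType) (m n : nat) (u : profile m n -> 'I_n -> 'I_m -> R) : Prop :=
  forall P i, consistent (P i) (u P i).

Definition udominates (R : realType) (m n : nat) (u : profile m n -> 'I_n -> 'I_m -> R)
  (P : profile m n) (q p : lottery R m) : Prop :=
  (forall i, EU (u P i) p <= EU (u P i) q) /\ (exists i, EU (u P i) p < EU (u P i) q).

Definition efficient (R : realType) (m n : nat) (f : SDS R m n) : Prop :=
  ~ exists P : profile m n,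
      forall u, is_urep u -> exists q : lottery R m, udominates u P q (f P).

Definition manipulable (R : realType) (m n : nat) (f : SDS R m n) : Prop :=
  exists (P : profile m n) (i : 'I_n) (s : pref m),
    forall u, is_urep u -> EU (u P i) (f P) < EU (u P i) (f (upd P i s)).

Definition strategyproof (R : realType) (m n : nat) (f : SDS R m n) : Prop :=
  ~ manipulable f.

(* Main.v *)
Require Import Defs.
From mathcomp Require Import all_boot all_order all_fingroup all_algebra.
From mathcomp Require Import reals.
From mathcomp Require Import ring lra.
From Stdlib Require Import FunctionalExtensionality.
Set Implicit Arguments. Unset Strict Implicit. Unset Printing Implicit Defensive.
Import Order.TTheory GRing.Theory Num.Theory.

Section Helpers.
Local Open Scope ring_scope.

Lemma pref_eq (m : nat) (s1 s2 : pref m) : sval s1 = sval s2 -> s1 = s2.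
Proof.
move: s1 s2 => [r1 h1] [r2 h2] /= E; subst; f_equal; exact: bool_irrelevance.
Qed.

Lemma lot_eq (R : realType) (m : nat) (p q : lottery R m) :
  (forall x, lot p x = lot q x) -> p = q.
Proof.
move: p q => [p hp] [q hq] /= E.
have epq : p = q by apply/ffunP => x; exact: E.
subst; f_equal; exact: bool_irrelevance.
Qed.

Lemma sum_indM (R : realType) (T : finType) (a : T) (F : T -> R) :
  \sum_z ((z == a)%:R * F z) = F a.
Proof.
rewrite (bigD1 a) //= eqxx mul1r big1 ?addr0 // => z /negbTE ->; by rewrite mul0r.
Qed.

Lemma widen_perm (a b : nat) (h : (a < b)%N) (s : {perm 'I_a.+1}) :
  exists s' : {perm 'I_b},
    (forall x : 'I_a.+1, s' (widen_ord h x) = widen_ord h (s x)) /\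
    (forall x : 'I_b, (a < x)%N -> s' x = x).
Proof.
pose g (x : 'I_b) : 'I_b := if (x < a.+1)%N then widen_ord h (s (inord x)) else x.
have gi : injective g.
  move=> x y; rewrite /g; case: ltnP => hx; case: ltnP => hy.
  - move/(congr1 val) => /= /val_inj /perm_inj /(congr1 (@nat_of_ord _)).
    by rewrite !inordK // => E; apply: val_inj.
  - by move=> E; move: hy; rewrite -E /= leqNgt ltn_ord.
  - by move=> E; move: hx; rewrite E /= leqNgt ltn_ord.
  - done.
exists (perm gi); split.
- by move=> x; rewrite permE /g /= ltn_ord inord_val.
- by move=> x hx; rewrite permE /g ltnNge hx.
Qed.

Definition unifF (R : realType) (k : nat) : {ffun 'I_k.+1 -> R} := [ffun _ => (k.+1%:R)^-1].

Lemma unif_ok (R : realType) (k : nat) :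
  [forall x, 0 <= unifF R k x] && (\sum_x unifF R k x == 1).
Proof.
apply/andP; split.
  by apply/forallP => x; rewrite ffunE invr_ge0 ler0n.
rewrite (eq_bigr (fun _ => (k.+1%:R : R)^-1)); last by move=> *; rewrite ffunE.
by rewrite sumr_const card_ord -(mulr_natr (k.+1%:R^-1)) mulVf // pnatr_eq0.
Qed.

Definition unif (R : realType) (k : nat) : lottery R k.+1 := exist _ (unifF R k) (unif_ok R k).

End Helpers.

Section Red.
Local Open Scope ring_scope.
Variables (R : realType) (m n k l : nat).
Hypotheses (hk : (k < m)%N) (hl : (l < n)%N).
Variable f : SDS R m n.
Hypotheses (hanon : anonymous f) (hneu : neutral f) (heff : efficient f)
  (hsp : strategyproof f).

Local Notation M := k.+1.
Local Notation N := l.+1.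
Local Notation wm := (widen_ord hk).
Local Notation wn := (widen_ord hl).

Definition extr (r : {ffun 'I_M -> {ffun 'I_M -> bool}}) : {ffun 'I_m -> {ffun 'I_m -> bool}} :=
  [ffun x : 'I_m => [ffun y : 'I_m =>
     (M <= y)%N || ((x < M)%N && r (inord x) (inord y))]].

Lemma extr_wo r : is_weak_order r -> is_weak_order (extr r).
Proof.
case/andP=> /forallP C /forallP T; apply/andP; split.
  apply/forallP=> x; apply/forallP=> y; rewrite !ffunE.
  case: (leqP M y) => //= hy; case: (leqP M x) => //= hx.
  exact: (forallP (C _)).
apply/forallP=> x; apply/forallP=> y; apply/forallP=> z; rewrite !ffunE.
case: (leqP M z) => hz /=; first by rewrite !implybT.
case: (leqP M y) => hy //=.
case: (leqP M x) => hx //=.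
exact: (forallP (forallP (T _) _)).
Qed.

Definition ext_pref (s : pref M) : pref m :=
  exist (fun r => is_weak_order r) (extr (sval s)) (extr_wo (proj2_sig s)).

Definition fullr : {ffun 'I_m -> {ffun 'I_m -> bool}} := [ffun _ => [ffun _ => true]].
Lemma fullr_wo : is_weak_order fullr.
Proof.
apply/andP; split; apply/forallP=> x; apply/forallP => y; [|apply/forallP=> z];
  by rewrite !ffunE.
Qed.
Definition full_pref : pref m := exist (fun r => is_weak_order r) fullr fullr_wo.

Definition extP (Q : profile M N) : profile m n :=
  fun j => if (j < N)%N then ext_pref (Q (inord j)) else full_pref.

Lemma extP_wn Q j : extP Q (wn j) = ext_pref (Q j).
Proof. by rewrite /extP /= ltn_ord inord_val. Qed.

Lemma extP_hi Q (j : 'I_n) : (N <= j)%N -> extP Q j = full_pref.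
Proof. by move=> hj; rewrite /extP ltnNge hj. Qed.

Lemma prefrel_ext Q j x y :
  prefrel (extP Q (wn j)) (wm x) (wm y) = prefrel (Q j) x y.
Proof.
by rewrite extP_wn /prefrel /= !ffunE /= leqNgt ltn_ord /= ltn_ord !inord_val.
Qed.

Lemma lot_ge0 (h : nat) (p : lottery R h) x : 0 <= lot p x.
Proof. by case/andP: (proj2_sig p) => /forallP H _; exact: H. Qed.

Lemma lot_sum (h : nat) (p : lottery R h) : \sum_x lot p x = 1.
Proof. by case/andP: (proj2_sig p) => _ /eqP. Qed.

Lemma support Q (x : 'I_m) : (M <= x)%N -> lot (f (extP Q)) x = 0.
Proof.
move=> hx; apply/eqP; apply: contraT => nz; exfalso; apply: heff.
exists (extP Q) => u hu.
set p := f (extP Q).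
have px : 0 < lot p x by rewrite lt_def nz lot_ge0.
pose y0 : 'I_m := wm ord0.
have hxy : x != y0 by apply/eqP => E; move: hx; rewrite E.
pose qf := [ffun z => lot p z + lot p x * ((z == y0)%:R - (z == x)%:R)].
have qok : [forall z, 0 <= qf z] && (\sum_z qf z == 1).
  apply/andP; split.
    apply/forallP => z; rewrite ffunE.
    case: (eqVneq z x) => [->|zx]; first by rewrite ?eqxx (negbTE hxy) /=; lra.
    have := lot_ge0 p z; case: (z == y0) => /=; nra.
  under eq_bigr do rewrite ffunE.
  rewrite big_split /= -mulr_sumr sumrB.
  have si a : \sum_z ((z == a)%:R : R) = 1.
    rewrite (eq_bigr (fun z => (z == a)%:R * (fun _ => 1 : R) z)) ?sum_indM //.
    by move=> z _; rewrite mulr1.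
  by rewrite !si lot_sum subrr mulr0 addr0.
pose q : lottery R m := exist _ qf qok.
have EUq v : EU v q = EU v p + lot p x * (v y0 - v x).
  rewrite /EU -(sum_indM y0 v) -(sum_indM x v) -sumrB mulr_sumr -big_split /=.
  by apply: eq_bigr => z _; rewrite /lot /= ffunE /lot; ring.
have top i : u (extP Q) i x <= u (extP Q) i y0.
  apply/(hu (extP Q) i y0 x); rewrite /prefrel /extP; case: ifP => _ /=;
    by rewrite !ffunE ?hx.
exists q; split.
  by move=> i; rewrite EUq lerDl; apply: mulr_ge0; [exact: ltW|rewrite subr_ge0].
exists (wn ord0); rewrite EUq ltrDl mulr_gt0 // subr_gt0 ltNge.
apply/negP => /(hu (extP Q) (wn ord0) x y0).
by rewrite extP_wn /prefrel /= !ffunE /= ltnNge hx.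
Qed.

Lemma sum_widen (F : 'I_m -> R) : (forall x : 'I_m, (M <= x)%N -> F x = 0) ->
  \sum_x F x = \sum_(y : 'I_M) F (wm y).
Proof.
move=> H; rewrite (bigID (fun x : 'I_m => (x < M)%N)) /= [X in _ + X]big1 ?addr0;
  last by move=> x; rewrite -leqNgt => /H.
rewrite (reindex_onto (fun y : 'I_M => wm y) (fun x : 'I_m => inord x)) /=.
  by apply: eq_bigl => y; rewrite ltn_ord inord_val eqxx.
by move=> x hx; apply: val_inj; rewrite /= inordK.
Qed.

Definition restrF (p : lottery R m) : {ffun 'I_M -> R} := [ffun y => lot p (wm y)].

Definition decb (b : bool) : {b} + {~~ b} :=
  if b as b0 return {b0} + {~~ b0} then left erefl else right erefl.

Definition f' (Q : profile M N) : lottery R M :=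
  match decb ([forall x, 0 <= restrF (f (extP Q)) x] &&
              (\sum_x restrF (f (extP Q)) x == 1)) with
  | left h => exist _ (restrF (f (extP Q))) h
  | right _ => unif R k
  end.

Lemma cond_true Q : [forall x, 0 <= restrF (f (extP Q)) x] &&
              (\sum_x restrF (f (extP Q)) x == 1).
Proof.
apply/andP; split; first by apply/forallP => x; rewrite ffunE lot_ge0.
rewrite -(lot_sum (f (extP Q))) (sum_widen (support Q)).
by apply/eqP; apply: eq_bigr => y _; rewrite ffunE.
Qed.

Lemma f'E Q y : lot (f' Q) y = lot (f (extP Q)) (wm y).
Proof.
rewrite /f'; case: (decb _) => h; first by rewrite /lot /= ffunE.
by rewrite cond_true in h.
Qed.

Lemma EU_f (v : 'I_m -> R) Q : EU v (f (extP Q)) = EU (fun y => v (wm y)) (f' Q).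
Proof.
rewrite /EU (sum_widen (F := fun x => lot (f (extP Q)) x * v x)); last first.
  by move=> x hx; rewrite support // mul0r.
by apply: eq_bigr => y _; rewrite f'E.
Qed.

Definition liftF (q : lottery R M) : {ffun 'I_m -> R} :=
  [ffun x : 'I_m => if (x < M)%N then lot q (inord x) else 0].

Lemma liftF_out q (x : 'I_m) : (M <= x)%N -> liftF q x = 0.
Proof. by move=> hx; rewrite ffunE ltnNge hx. Qed.

Lemma liftF_w q y : liftF q (wm y) = lot q y.
Proof. by rewrite ffunE /= ltn_ord inord_val. Qed.

Lemma lift_ok q : [forall x, 0 <= liftF q x] && (\sum_x liftF q x == 1).
Proof.
apply/andP; split.
  by apply/forallP => x; rewrite ffunE; case: ifP => _ //; rewrite lot_ge0.
rewrite (sum_widen (liftF_out q)) -(lot_sum q); apply/eqP.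
by apply: eq_bigr => y _; rewrite liftF_w.
Qed.

Definition liftL q : lottery R m := exist _ (liftF q) (lift_ok q).

Lemma EU_lift (v : 'I_m -> R) q : EU v (liftL q) = EU (fun y => v (wm y)) q.
Proof.
rewrite /EU (sum_widen (F := fun x => lot (liftL q) x * v x)); last first.
  by move=> x hx; rewrite /lot /= liftF_out // mul0r.
by apply: eq_bigr => y _; rewrite /lot /= liftF_w.
Qed.

Lemma EU_flat (v : 'I_m -> R) (p q : lottery R m) :
  (forall x y, v y <= v x) -> EU v p = EU v q.
Proof.
move=> H.
have E x : v x = v (wm ord0) by apply/le_anti; rewrite !H.
have C (r : lottery R m) : EU v r = v (wm ord0).
  rewrite /EU (eq_bigr (fun x => lot r x * v (wm ord0))); last by move=> x _; rewrite E.
  by rewrite -mulr_suml lot_sum mul1r.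
by rewrite !C.
Qed.

Definition restrU (u : profile m n -> 'I_n -> 'I_m -> R) : profile M N -> 'I_N -> 'I_M -> R :=
  fun (Q : profile M N) (j : 'I_N) (y : 'I_M) => u (extP Q) (wn j) (wm y).

Lemma urep_restr (u : profile m n -> 'I_n -> 'I_m -> R) : is_urep u -> is_urep (restrU u).
Proof.
move=> hu Q j x y; rewrite /restrU -prefrel_ext; exact: hu.
Qed.

Lemma full_flat (u : profile m n -> 'I_n -> 'I_m -> R) (hu : is_urep u) Q (i : 'I_n) : (N <= i)%N ->
  forall x y, u (extP Q) i y <= u (extP Q) i x.
Proof.
move=> hi x y; apply/(hu (extP Q) i x y).
by rewrite extP_hi // /prefrel /= !ffunE.
Qed.

Lemma f'_anon : anonymous f'.
Proof.
move=> Q s; have [s' [H1 H2]] := widen_perm hl s.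
have E : extP (fun i => Q (s i)) = fun i => extP Q (s' i).
  apply: functional_extensionality => i.
  case: (ltnP i N) => hi.
    have -> : i = wn (inord i) by apply: val_inj; rewrite /= inordK.
    by rewrite H1 !extP_wn.
  by rewrite H2 // !extP_hi.
apply: lot_eq => y; rewrite !f'E E; by rewrite hanon.
Qed.

Lemma ext_perm_pref (p : {perm 'I_M}) (p' : {perm 'I_m})
  (H1 : forall x : 'I_M, p' (wm x) = wm (p x))
  (H2 : forall x : 'I_m, (k < x)%N -> p' x = x) (s : pref M) :
  ext_pref (perm_pref p s) = perm_pref p' (ext_pref s).
Proof.
apply: pref_eq => /=; apply/ffunP => a; apply/ffunP => b; rewrite !ffunE.
have [a0 ->] : exists a0, a = p' a0 by exists (p'^-1 a)%g; rewrite permKV.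
have [b0 ->] : exists b0, b = p' b0 by exists (p'^-1 b)%g; rewrite permKV.
rewrite !permK.
have D (c : 'I_m) : (exists c1, c = wm c1) \/ (k < c)%N.
  case: (ltnP c M) => hc; last by right.
  by left; exists (inord c); apply: val_inj; rewrite /= inordK.
case: (D b0) => [[b1 ->]|hb]; last first.
  by rewrite H2 // hb.
rewrite H1 /= !(leqNgt M) !ltn_ord /=.
case: (D a0) => [[a1 ->]|ha]; last first.
  by rewrite H2 // ltnNge ha.
by rewrite H1 /= !ltn_ord /= !inord_val !permK.
Qed.

Lemma f'_neu : neutral f'.
Proof.
move=> Q p x; have [p' [H1 H2]] := widen_perm hk p.
have E : extP (fun i => perm_pref p (Q i)) = fun i => perm_pref p' (extP Q i).
  apply: functional_extensionality => i.
  case: (ltnP i N) => hi.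
    have -> : i = wn (inord i) by apply: val_inj; rewrite /= inordK.
    by rewrite !extP_wn (ext_perm_pref H1 H2).
  rewrite !extP_hi //; apply: pref_eq => /=.
  by apply/ffunP => a; apply/ffunP => b; rewrite !ffunE.
by rewrite !f'E E -H1 -hneu.
Qed.

Lemma f'_eff : efficient f'.
Proof.
move=> [Q H]; apply: heff; exists (extP Q) => u hu.
have [q' [Hle [j Hlt]]] := H (restrU u) (urep_restr hu).
exists (liftL q'); split.
  move=> i; case: (ltnP i N) => hi.
    have -> : i = wn (inord i) by apply: val_inj; rewrite /= inordK.
    rewrite EU_f EU_lift; exact: Hle.
  by rewrite (EU_flat _ (liftL q') (full_flat hu Q hi)).
by exists (wn j); rewrite EU_f EU_lift; exact: Hlt.
Qed.

Lemma upd_ext Q j s : upd (extP Q) (wn j) (ext_pref s) = extP (upd Q j s).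
Proof.
apply: functional_extensionality => i; rewrite /upd.
case: (ltnP i N) => hi.
  have -> : i = wn (inord i) by apply: val_inj; rewrite /= inordK.
  rewrite !extP_wn /upd.
  case: (eqVneq (inord i : 'I_N) j) => [->|ne]; first by rewrite eqxx.
  have -> : (wn (inord i) == wn j) = false.
    by apply/eqP => /(congr1 val) /= /val_inj; apply/eqP.
  by [].
have -> : (i == wn j) = false.
  by apply/eqP => E; move: hi; rewrite E /= leqNgt ltn_ord.
by rewrite !extP_hi.
Qed.

Lemma f'_sp : strategyproof f'.
Proof.
move=> [Q [j [s H]]]; apply: hsp.
exists (extP Q), (wn j), (ext_pref s) => u hu.
have := H (restrU u) (urep_restr hu).
by rewrite upd_ext !EU_f.
Qed.

End Red.

Theorem lemma4p1 (R : realType) (m n : nat) (f : SDS R m n) :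
  anonymous f -> neutral f -> efficient f -> strategyproof f ->
  forall m' n' : nat, (0 < m')%N -> (m' <= m)%N -> (n' <= n)%N ->
  exists f' : SDS R m' n',
    anonymous f' /\ neutral f' /\ efficient f' /\ strategyproof f'.
Proof.
move=> ha hn he hs [|k] // [|l] _ hk hl.
  exists (fun _ => unif R k); split; first by [].
  split; first by move=> P p x; rewrite /lot /= !ffunE.
  split.
    move=> [P H].
    have hu : is_urep (fun (_ : profile k.+1 0) (_ : 'I_0) (_ : 'I_k.+1) => 0%R : R).
      by move=> P0 i; exfalso; case: i.
    by have [q [_ [[i hi] _]]] := H _ hu.
  by move=> [P [[i hi] _]].
exists (f' hk f); split; first exact: f'_anon.
split; first exact: f'_neu.
split; first exact: f'_eff.
exact: f'_sp.
Qed.
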